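(* Let $H$ be a hyperfield and let $X=\operatorname{Spec}A$ be an affine scheme, $A$ a commutative ring. Then there is a natural bijection of sets $$\operatorname{Hom}(A,H)\;=\;\operatorname{Hom}_{\mathfrak{Lhs}}(\operatorname{Spec}H,X),$$ where the left side is the set of hyperring homomorphisms $A\to H$ and the right side is the set of morphisms of locally hyperringed spaces. (A homomorphism $f:A\to H$ corresponds to the point $\ker f\in X$ together with the induced homomorphism $k(\ker f)=\operatorname{Frac}(A/\ker f)\to H$; conversely a morphism induces the map on global sections $A\to H$.)
   Context: A hyperoperation on a set $H$ is a map from $H\times H$ to the set of nonempty subsets of $H$; for subsets $A,B$ one writes $A+B=\bigcup_{a\in A,b\in B}a+b$. A canonical hypergroup is a set with a commutative, associative hyperoperation $+$ and an element $0$ with $0+x=\{x\}$, such that each $x$ has a unique $-x$ with $0\in x+(-x)$, and $x\in y+z$ implies $z\in x+(-y)$. A hyperring is a set $R$ with a hyperaddition making it a canonical hypergroup and a multiplication making $(R,\cdot,1)$ a commutative monoid, with $x(y+z)=xy+xz$ and $x\cdot0=0$; a hyperfield is a hyperring whose nonzero elements are multiplicatively invertible. A homomorphism of hyperrings $f$ satisfies $f(0)=0$, $f(1)=1$, $f(xy)=f(x)f(y)$, $f(x+y)\subseteq f(x)+f(y)$. For a hyperfield $H$, $\operatorname{Spec}H$ is the one-point space $\{y\}$ with structure sheaf having $H$ as sections over $\{y\}$ (its unique prime/maximal ideal is $\{0\}$). A locally hyperringed space is a topological space with a sheaf of hyperrings whose stalks exist (as colimits of hyperrings) and each have a unique maximal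 ideal; morphisms are pairs $(f,f^\#)$ of a continuous map and a morphism of sheaves of hyperrings $\mathcal O_Y\to f_*\mathcal O_X$ with local stalk maps (preimage of the maximal ideal is the maximal ideal). $\mathfrak{Lhs}$ denotes the category of locally hyperringed spaces; schemes are regarded as objects of it. *)

(* Defs.v *)
From HB Require Import structures.
From mathcomp Require Import all_boot all_algebra.
From Stdlib Require Import Ring FunctionalExtensionality PropExtensionality.
Set Implicit Arguments.
Unset Strict Implicit.
Unset Printing Implicit Defensive.
Import GRing.Theory.

(* Raw hyperring data: [hr_add x y z] means  z \in x + y. *)
Record HRData := {
  hr_car :> Type;
  hr_add : hr_car -> hr_car -> hr_car -> Prop;
  hr_zero : hr_car;
  hr_one : hr_car;
  hr_mul : hr_car -> hr_car -> hr_car }.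

Arguments hr_add {h}.
Arguments hr_zero {h}.
Arguments hr_one {h}.
Arguments hr_mul {h}.

(* Canonical hypergroup + commutative monoid + distributivity + x*0 = 0. *)
Definition is_hyperring (R : HRData) : Prop :=
  (forall x y : R, exists z, hr_add x y z) /\
  (forall x y z : R, hr_add x y z -> hr_add y x z) /\
  (* associativity (x + y) + z = x + (y + z) as sets *)
  (forall x y z w : R,
     (exists u, hr_add x y u /\ hr_add u z w) <->
     (exists u, hr_add y z u /\ hr_add x u w)) /\
  (forall x z : R, hr_add hr_zero x z <-> z = x) /\
  (forall x : R, exists! y : R, hr_add x y hr_zero) /\
  (forall x y z y' : R, hr_add y y' hr_zero -> hr_add y z x -> hr_add x y' z) /\
  (forall x y z : R, hr_mul x (hr_mul y z) = hr_mul (hr_mul x y) z) /\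
  (forall x y : R, hr_mul x y = hr_mul y x) /\
  (forall x : R, hr_mul hr_one x = x) /\
  (forall x y z w : R,
     (exists u, hr_add y z u /\ w = hr_mul x u) <-> hr_add (hr_mul x y) (hr_mul x z) w) /\
  (forall x : R, hr_mul x hr_zero = hr_zero).

Definition is_hyperfield (H : HRData) : Prop :=
  is_hyperring H /\ (hr_one : H) <> hr_zero /\
  (forall x : H, x <> hr_zero -> exists y, hr_mul x y = hr_one).

Definition is_hr_hom (R S : HRData) (f : R -> S) : Prop :=
  f hr_zero = hr_zero /\ f hr_one = hr_one /\
  (forall x y, f (hr_mul x y) = hr_mul (f x) (f y)) /\
  (forall x y z, hr_add x y z -> hr_add (f x) (f y) (f z)).

Definition hr_unit (R : HRData) (x : R) : Prop := exists y, hr_mul x y = hr_one.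

Definition ring_hrd (A : comPzRingType) : HRData :=
  {| hr_car := A; hr_add := fun x y z => z = (x + y)%R;
     hr_zero := 0%R; hr_one := 1%R; hr_mul := fun x y => (x * y)%R |}.

(* Pointwise hyperring of functions from a proposition P to H
   (sections of the structure sheaf of Spec H over an open V: P := "y \in V"). *)
Definition fun_hrd (P : Prop) (H : HRData) : HRData :=
  {| hr_car := P -> H;
     hr_add := fun s t u => forall h : P, hr_add (s h) (t h) (u h);
     hr_zero := fun _ => hr_zero; hr_one := fun _ => hr_one;
     hr_mul := fun s t h => hr_mul (s h) (t h) |}.

(* A topological space (open subsets given by [hs_open]) with a presheaf of
   hyperrings: [hs_sec U] are the sections over U (only meaningful for open U)
   and [hs_res] the restriction maps. *)
Record HSpace := {
  hs_pt : Type;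
  hs_open : (hs_pt -> Prop) -> Prop;
  hs_sec : forall U : hs_pt -> Prop, hs_open U -> HRData;
  hs_res : forall (U V : hs_pt -> Prop) (hU : hs_open U) (hV : hs_open V),
             (forall x, V x -> U x) -> hs_sec hU -> hs_sec hV }.

Arguments hs_open {h}.
Arguments hs_res {h}.
Arguments hs_sec : clear implicits.

(* The germ of s in O(U) at z (z \in U) is a unit of the stalk at z. *)
Definition unit_near (X : HSpace) (U : hs_pt X -> Prop) (z : hs_pt X)
  (hU : hs_open U) (s : hs_sec X U hU) : Prop :=
  exists (W : hs_pt X -> Prop) (hW : hs_open W) (hWU : forall x, W x -> U x),
    W z /\ hr_unit (hs_res U W hU hW hWU s).
Arguments unit_near : clear implicits.

(* Morphisms Y -> X of locally hyperringed spaces: a continuous map f with a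
   morphism of sheaves of hyperrings O_X -> f_* O_Y whose stalk maps are local. *)
Unset Implicit Arguments.
Record LhsHom (Y X : HSpace) := {
  mor_pt : hs_pt Y -> hs_pt X;
  mor_cont : forall U, hs_open U -> hs_open (fun y => U (mor_pt y));
  (* the sheaf map O_X(U) -> (f_* O_Y)(U) = O_Y(f^-1 U) *)
  mor_sh : forall U (hU : hs_open U),
             hs_sec X U hU -> hs_sec Y (fun y => U (mor_pt y)) (@mor_cont U hU);
  mor_hom : forall U (hU : hs_open U), is_hr_hom (@mor_sh U hU);
  mor_nat : forall U V (hU : hs_open U) (hV : hs_open V)
              (hVU : forall x, V x -> U x) (s : hs_sec X U hU),
      @mor_sh V hV (hs_res U V hU hV hVU s) =
      hs_res (fun y => U (mor_pt y)) (fun y => V (mor_pt y))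
             (@mor_cont U hU) (@mor_cont V hV)
             (fun y => hVU (mor_pt y)) (@mor_sh U hU s);
  (* locality: at each y the stalk map O_{X,f y} -> O_{Y,y} pulls back the
     maximal ideal (= non-units) to the maximal ideal *)
  mor_local : forall (y : hs_pt Y) U (hU : hs_open U) (s : hs_sec X U hU),
      U (mor_pt y) ->
      (unit_near X U (mor_pt y) hU s <->
       unit_near Y (fun y' => U (mor_pt y')) y (@mor_cont U hU) (@mor_sh U hU s)) }.
Set Implicit Arguments.
Arguments mor_pt {Y X}.
Arguments mor_cont {Y X} m {U} : rename.
Arguments mor_sh {Y X} m {U} hU : rename.


Definition SpecH (H : HRData) : HSpace :=
  {| hs_pt := unit;
     hs_open := fun _ => True;
     hs_sec := fun V _ => fun_hrd (V tt) H;
     hs_res := fun U V _ _ hVU (s : fun_hrd (U tt) H) =>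
                 (fun hv : V tt => s (hVU tt hv)) : fun_hrd (V tt) H |}.

Local Open Scope ring_scope.

Section SpecRing.
Variable A : comPzRingType.

Lemma A_ring_th : ring_theory (0 : GRing.PzSemiRing.sort A) 1 +%R *%R (fun x y => x - y) -%R eq.
Proof.
split.
- exact: add0r.
- exact: addrC.
- exact: addrA.
- exact: mul1r.
- exact: mulrC.
- exact: mulrA.
- exact: mulrDl.
- by [].
- exact: subrr.
Qed.
Add Ring A_ring : A_ring_th.
Ltac aring := match goal with |- @eq _ ?x ?y => change (@eq (GRing.PzSemiRing.sort A) x y) end; ring.
Lemma A_ring_th' : @ring_theory (GRing.ComPzRing.sort A) 0 1 +%R *%R (fun x y => x - y) -%R eq.
Proof. exact: A_ring_th. Qed.


Definition prime_ideal (P : A -> Prop) : Prop :=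
  P 0 /\ (forall x y, P x -> P y -> P (x + y)) /\
  (forall a x, P x -> P (a * x)) /\ ~ P 1 /\
  (forall x y, P (x * y) -> P x \/ P y).

Definition SpecPt := {P : A -> Prop | prime_ideal P}.

(* Zariski opens: unions of basic opens D(s) = {p | s \notin p}. *)
Definition zar_open (U : SpecPt -> Prop) : Prop :=
  exists S : A -> Prop, forall p : SpecPt, U p <-> exists s, S s /\ ~ sval p s.

(* Localization A_p: an element is the equivalence class of a fraction a/f,
   represented as the predicate of all fractions equal to it. *)
Definition frac_eqv (p : SpecPt) (x y : A * A) : Prop :=
  ~ sval p x.2 /\ ~ sval p y.2 /\
  exists u, ~ sval p u /\ u * (x.1 * y.2 - y.1 * x.2) = 0.

Definition cls (p : SpecPt) (a f : A) : A * A -> Prop := frac_eqv p (a, f).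

Definition addC (p : SpecPt) (C D : A * A -> Prop) : A * A -> Prop :=
  fun x => exists a f b g, C (a, f) /\ D (b, g) /\ frac_eqv p (a * g + b * f, f * g) x.
Definition mulC (p : SpecPt) (C D : A * A -> Prop) : A * A -> Prop :=
  fun x => exists a f b g, C (a, f) /\ D (b, g) /\ frac_eqv p (a * b, f * g) x.

(* Structure sheaf: s \in O(U) iff s assigns to each p \in U an element of A_p,
   locally of the form a/f (on a basic neighbourhood D(h) of p inside U). *)
Definition locfrac (U : SpecPt -> Prop) (s : forall p : SpecPt, U p -> A * A -> Prop) :=
  forall p (hp : U p), exists h a f, ~ sval p h /\
    forall q : SpecPt, ~ sval q h ->
      U q /\ ~ sval q f /\ forall hq : U q, s q hq = cls q a f.

Definition SecA (U : SpecPt -> Prop) := {s | @locfrac U s}.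

Lemma prime_mul (p : SpecPt) x y : ~ sval p x -> ~ sval p y -> ~ sval p (x * y).
Proof. case: p => P [_ [_ [_ [_ H]]]] /= hx hy /H []; tauto. Qed.

Lemma prime_mulL (p : SpecPt) x y : ~ sval p (x * y) -> ~ sval p x.
Proof. case: p => P [_ [_ [H _]]] /= hxy hx; apply: hxy; rewrite mulrC; exact: H. Qed.

Lemma prime_mulR (p : SpecPt) x y : ~ sval p (x * y) -> ~ sval p y.
Proof. case: p => P [_ [_ [H _]]] /= hxy hy; exact/hxy/H. Qed.

Lemma prime_one (p : SpecPt) : ~ sval p 1.
Proof. by case: p => P [? [? [? [H ?]]]]. Qed.

Lemma eqv_refl p a f : ~ sval p f -> frac_eqv p (a, f) (a, f).
Proof.
move=> hf; split=> //; split=> //; exists 1; split; first exact: prime_one.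
rewrite /=; aring.
Qed.

Lemma eqv_sym p x y : frac_eqv p x y -> frac_eqv p y x.
Proof.
move=> [hx [hy [u [hu e]]]]; split=> //; split=> //; exists u; split=> //.
transitivity (- (u * (x.1 * y.2 - y.1 * x.2))); first aring.
by rewrite e oppr0.
Qed.

Lemma eqv_trans p x y z : frac_eqv p x y -> frac_eqv p y z -> frac_eqv p x z.
Proof.
move=> [hx [hy [u [hu e1]]]] [_ [hz [v [hv e2]]]]; split=> //; split=> //.
exists (u * v * y.2); split; first by apply: prime_mul => //; apply: prime_mul.
transitivity (v * z.2 * (u * (x.1 * y.2 - y.1 * x.2)) +
              u * x.2 * (v * (y.1 * z.2 - z.1 * y.2))); first aring.
by rewrite e1 e2 !mulr0 addr0.
Qed.

Lemma eqv_mul p a f b g a' f' b' g' :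
  frac_eqv p (a, f) (a', f') -> frac_eqv p (b, g) (b', g') ->
  frac_eqv p (a * b, f * g) (a' * b', f' * g').
Proof.
move=> [hf [hf' [u [hu e1]]]] [hg [hg' [v [hv e2]]]] /=.
split; first exact: prime_mul. split; first exact: prime_mul.
exists (u * v); split; first exact: prime_mul.
simpl in e1, e2.
rewrite /=; transitivity (v * b * g' * (u * (a * f' - a' * f)) +
              u * a' * f * (v * (b * g' - b' * g))); first aring.
by rewrite e1 e2 !mulr0 addr0.
Qed.

Lemma eqv_add p a f b g a' f' b' g' :
  frac_eqv p (a, f) (a', f') -> frac_eqv p (b, g) (b', g') ->
  frac_eqv p (a * g + b * f, f * g) (a' * g' + b' * f', f' * g').
Proof.
move=> [hf [hf' [u [hu e1]]]] [hg [hg' [v [hv e2]]]] /=.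
split; first exact: prime_mul. split; first exact: prime_mul.
exists (u * v); split; first exact: prime_mul.
simpl in e1, e2.
rewrite /=; transitivity (v * g * g' * (u * (a * f' - a' * f)) +
              u * f * f' * (v * (b * g' - b' * g))); first aring.
by rewrite e1 e2 !mulr0 addr0.
Qed.

Lemma mulC_cls p a f b g : ~ sval p f -> ~ sval p g ->
  mulC p (cls p a f) (cls p b g) = cls p (a * b) (f * g).
Proof.
move=> hf hg; apply: functional_extensionality => x.
apply: propositional_extensionality; split.
- move=> [a' [f' [b' [g' [h1 [h2 h3]]]]]].
  exact: eqv_trans (eqv_mul h1 h2) h3.
- move=> h; exists a, f, b, g; split; first exact: eqv_refl.
  by split; first exact: eqv_refl.
Qed.

Lemma locfrac_const U (hU : zar_open U) (a : A) : @locfrac U (fun q _ => cls q a 1).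
Proof.
move=> p hp; case: hU => S HS; case: (proj1 (HS p) hp) => h [Sh hph].
exists h, a, 1; split=> // q hq; split; first by apply/HS; exists h.
by split=> //; apply: prime_one.
Qed.

Lemma locfrac_mul U s t : @locfrac U s -> @locfrac U t ->
  @locfrac U (fun q hq => mulC q (s q hq) (t q hq)).
Proof.
move=> hs ht p hp.
case: (hs p hp) => h1 [a1 [f1 [hp1 H1]]]; case: (ht p hp) => h2 [a2 [f2 [hp2 H2]]].
exists (h1 * h2), (a1 * a2), (f1 * f2); split; first exact: prime_mul.
move=> q hq.
case: (H1 q (prime_mulL hq)) => Uq [qf1 e1]; case: (H2 q (prime_mulR hq)) => _ [qf2 e2].
split=> //; split; first exact: prime_mul.
by move=> hq'; rewrite e1 e2 mulC_cls.
Qed.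

Lemma locfrac_res U V (hV : zar_open V) (hVU : forall q, V q -> U q) s :
  @locfrac U s -> @locfrac V (fun q hq => s q (hVU q hq)).
Proof.
move=> hs p hp; case: hV => S HS; case: (proj1 (HS p) hp) => h0 [Sh0 hph0].
case: (hs p (hVU p hp)) => h [a [f [hph H]]].
exists (h * h0), a, f; split; first exact: prime_mul.
move=> q hq; case: (H q (prime_mulL hq)) => _ [qf e].
split; first by apply/HS; exists h0; split=> //; exact: prime_mulR hq.
by split=> // hq'; rewrite e.
Qed.

Definition sec_const U (hU : zar_open U) (a : A) : SecA U :=
  exist _ _ (locfrac_const hU a).

Definition sec_mul U (s t : SecA U) : SecA U :=
  exist _ _ (locfrac_mul (svalP s) (svalP t)).

Definition sec_res U V (hV : zar_open V) (hVU : forall q, V q -> U q)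
  (s : SecA U) : SecA V := exist _ _ (locfrac_res hV hVU (svalP s)).

Definition SecA_hrd (U : SpecPt -> Prop) (hU : zar_open U) : HRData :=
  {| hr_car := SecA U;
     hr_add := fun s t u => forall p (hp : U p),
                 sval u p hp = addC p (sval s p hp) (sval t p hp);
     hr_zero := sec_const hU 0; hr_one := sec_const hU 1;
     hr_mul := @sec_mul U |}.

Lemma zar_open_full : zar_open (fun _ => True).
Proof. exists (fun s => s = 1) => p; split=> // _; exists 1; split=> //; exact: prime_one. Qed.

End SpecRing.

Definition SpecA (A : comPzRingType) : HSpace :=
  {| hs_pt := SpecPt A;
     hs_open := @zar_open A;
     hs_sec := @SecA_hrd A;
     hs_res := fun U V _ hV hVU (s : SecA_hrd _) => (sec_res hV hVU s : SecA_hrd hV) |}.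

Definition canon (A : comPzRingType) (a : A) : hs_sec (SpecA A) _ (@zar_open_full A) :=
  sec_const (@zar_open_full A) a.

(* Global sections of a morphism Spec H -> Spec A, read as a map A -> H:
   A -> O_X(X) -> O_{Spec H}(f^-1 X) = O_{Spec H}({y}) = H. *)
Definition glob_map (H : HRData) (A : comPzRingType)
  (m : LhsHom (SpecH H) (SpecA A)) (a : A) : H :=
  (mor_sh m (@zar_open_full A) (canon a) : fun_hrd True H) I.

(* Main.v *)
Require Import Defs.
From mathcomp Require Import all_boot all_algebra.
From Stdlib Require Import ClassicalEpsilon ProofIrrelevance FunctionalExtensionality PropExtensionality Classical.
Require Import Defs.
Set Implicit Arguments.
Unset Strict Implicit.
Unset Printing Implicit Defensive.
Import GRing.Theory.

Section HF.
Variable H : HRData.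
Hypothesis hH : is_hyperfield H.
Local Notation "x ** y" := (@hr_mul H x y) (at level 40).
Local Notation O := (@hr_zero H).
Local Notation I1 := (@hr_one H).

Lemma hmulA (x y z : H) : x ** (y ** z) = (x ** y) ** z.
Proof. by case: hH => [[_ [_ [_ [_ [_ [_ [h _]]]]]]] _]. Qed.
Lemma hmulC (x y : H) : x ** y = y ** x.
Proof. by case: hH => [[_ [_ [_ [_ [_ [_ [_ [h _]]]]]]]] _]. Qed.
Lemma hmul1 (x : H) : I1 ** x = x.
Proof. by case: hH => [[_ [_ [_ [_ [_ [_ [_ [_ [h _]]]]]]]]] _]. Qed.
Lemma hdistr (x y z w : H) :
  (exists u, hr_add y z u /\ w = x ** u) -> hr_add (x ** y) (x ** z) w.
Proof. by case: hH => [[_ [_ [_ [_ [_ [_ [_ [_ [_ [h _]]]]]]]]]] _] /h. Qed.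
Lemma hmul0 (x : H) : x ** O = O.
Proof. by case: hH => [[_ [_ [_ [_ [_ [_ [_ [_ [_ [_ h]]]]]]]]]] _]. Qed.
Lemma hadd0 (x z : H) : hr_add O x z -> z = x.
Proof. by case: hH => [[_ [_ [_ [h _]]]] _] /h. Qed.
Lemma hone_ne0 : I1 <> O.
Proof. by case: hH => [_ [h _]]. Qed.
Lemma hinv_ex (x : H) : x <> O -> exists y, x ** y = I1.
Proof. by case: hH => [_ [_ h]] /h. Qed.
Lemma hmul1r (x : H) : x ** I1 = x.
Proof. by rewrite hmulC hmul1. Qed.
Lemma hmul0l (x : H) : O ** x = O.
Proof. by rewrite hmulC hmul0. Qed.
Lemma hmulACA (a b c d : H) : (a ** b) ** (c ** d) = (a ** c) ** (b ** d).
Proof.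
rewrite -!hmulA; congr (a ** _); rewrite !hmulA; congr (_ ** d); exact: hmulC.
Qed.

Definition hinv (x : H) : H := epsilon (inhabits O) (fun y => x ** y = I1).
Lemma hinvr (x : H) : x <> O -> x ** hinv x = I1.
Proof.
move=> hx; rewrite /hinv.
exact: (epsilon_spec (inhabits O) (fun y => x ** y = I1) (hinv_ex hx)).
Qed.
Lemma hmul_eq0 (x y : H) : x ** y = O -> x = O \/ y = O.
Proof.
move=> e; case: (classic (x = O)) => hx; [by left | right].
by rewrite -[y]hmul1 -(hinvr hx) (hmulC x) -hmulA e hmul0.
Qed.
Lemma hinv_ne0 (x : H) : x <> O -> hinv x <> O.
Proof. by move=> hx e; apply: hone_ne0; rewrite -(hinvr hx) e hmul0. Qed.
Lemma hinv_uniq (x y : H) : x ** y = I1 -> hinv x = y.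
Proof.
move=> e; have hx : x <> O by move=> ex; apply: hone_ne0; rewrite -e ex hmul0l.
by rewrite -[hinv x]hmul1r -e hmulA (hmulC _ x) hinvr // hmul1.
Qed.
Lemma hinvM (x y : H) : x <> O -> y <> O -> hinv (x ** y) = hinv x ** hinv y.
Proof. by move=> hx hy; apply: hinv_uniq; rewrite hmulACA !hinvr // hmul1. Qed.
Lemma hinv1 : hinv I1 = I1.
Proof. by apply: hinv_uniq; rewrite hmul1. Qed.
Lemma hfrac_eq (a b c d : H) : b <> O -> d <> O -> a ** d = c ** b ->
  a ** hinv b = c ** hinv d.
Proof.
move=> hb hd e.
rewrite -[a ** hinv b]hmul1r -(hinvr hd) hmulACA e (hmulC (hinv b)) hmulACA.
by rewrite hinvr // hmul1r.
Qed.
End HF.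


Local Open Scope ring_scope.

Section SA.
Variable A : comPzRingType.

Lemma cls_eq (p : SpecPt A) x y x' y' : frac_eqv p (x, y) (x', y') -> cls p x y = cls p x' y'.
Proof.
move=> e; apply: functional_extensionality => z; apply: propositional_extensionality.
split=> h; first exact: eqv_trans (eqv_sym e) h.
exact: eqv_trans e h.
Qed.

Lemma addC_cls (p : SpecPt A) a f b g : ~ sval p f -> ~ sval p g ->
  addC p (cls p a f) (cls p b g) = cls p (a * g + b * f) (f * g).
Proof.
move=> hf hg; apply: functional_extensionality => x.
apply: propositional_extensionality; split.
- move=> [a' [f' [b' [g' [h1 [h2 h3]]]]]].
  exact: eqv_trans (eqv_add h1 h2) h3.
- move=> h; exists a, f, b, g; split; first exact: eqv_refl.
  by split; first exact: eqv_refl.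
Qed.

Lemma sec_ext (U : SpecPt A -> Prop) (s t : SecA U) : (forall q hq, sval s q hq = sval t q hq) -> s = t.
Proof.
case: s => s hs; case: t => t ht /= e.
have est : s = t.
  apply: functional_extensionality_dep => q; apply: functional_extensionality_dep => hq.
  exact: e.
subst t; f_equal; apply: proof_irrelevance.
Qed.

Lemma prime0 (p : SpecPt A) : sval p 0.
Proof. by case: p => P hP /=; case: hP. Qed.
Lemma primeD (p : SpecPt A) x y : sval p x -> sval p y -> sval p (x + y).
Proof. by case: p => P hP /=; case: hP => _ [h _]; apply: h. Qed.
Lemma primeMl (p : SpecPt A) a x : sval p x -> sval p (a * x).
Proof. by case: p => P hP /=; case: hP => _ [_ [h _]]; apply: h. Qed.
Lemma primeMr (p : SpecPt A) a x : sval p x -> sval p (x * a).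
Proof. by rewrite mulrC; apply: primeMl. Qed.
Lemma prime_or (p : SpecPt A) x y : sval p (x * y) -> sval p x \/ sval p y.
Proof. by case: p => P hP /=; case: hP => _ [_ [_ [_ h]]]; apply: h. Qed.

Lemma prime_transfer (p : SpecPt A) u x y : ~ sval p u -> u * (x - y) = 0 ->
  sval p y -> sval p x.
Proof.
move=> hu e hy.
have : sval p (u * (x - y)) by rewrite e; apply: prime0.
case/prime_or => // hxy.
by rewrite -(subrK y x); apply: primeD.
Qed.

Lemma cls_in (p : SpecPt A) a f a' f' : ~ sval p f' -> cls p a f = cls p a' f' ->
  frac_eqv p (a, f) (a', f').
Proof. by move=> hf' e; change (cls p a f (a', f')); rewrite e; apply: eqv_refl. Qed.

Lemma unit_near_iff U (hU : zar_open U) (p : SpecPt A) (hp : U p)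
  (s : hs_sec (SpecA A) U hU) a f :
  ~ sval p f -> sval s p hp = cls p a f ->
  (unit_near (SpecA A) U p hU s <-> ~ sval p a).
Proof.
move=> hf es; split.
- move=> [W [hW [hWU [Wp [t ht]]]]].
  have := f_equal (fun r : SecA (A:=A) W => sval r p Wp) ht.
  rewrite /= (proof_irrelevance _ (hWU p Wp) hp) es.
  case: (svalP t p Wp) => h [b [e [hph He]]].
  case: (He p hph) => _ [he et]; rewrite (et Wp) mulC_cls //.
  move=> E ha.
  have := eqv_sym (cls_in (@prime_one _ p) E) => -[_ [_ [u [hu eu]]]].
  apply: (prime_mul hf he).
  apply: (prime_transfer hu (y := a * b)); last exact: primeMr.
  by rewrite -eu /= mul1r mulr1.
- move=> ha.
  case: (svalP s p hp) => h [a' [f' [hph Hs]]].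
  case: (Hs p hph) => _ [hf' es'].
  have E := cls_in hf' (etrans (esym es) (es' hp)).
  have ha' : ~ sval p a'.
    move=> ha'; apply: ha.
    case: E => _ [_ [u [hu eu]]].
    have : sval p (a * f').
      by apply: (prime_transfer hu (y := a' * f)) => //; apply: primeMr.
    by case/prime_or.
  pose W := fun q : SpecPt A => ~ sval q (h * a').
  have hW : zar_open W.
    by exists (fun x => x = h * a') => q; split; [exists (h * a') | case=> x [-> ?]].
  have hWU : forall q, W q -> U q.
    by move=> q hq; case: (Hs q (prime_mulL hq)).
  have ht : @locfrac A W (fun q _ => cls q f' a').
    move=> q hq; exists (h * a'), f', a'; split=> // q' hq'; split=> //.
    by split=> //; apply: (prime_mulR hq').
  exists W, hW, hWU; split; first exact: prime_mul.
  exists (exist _ _ ht); apply: sec_ext => q hq /=.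
  case: (Hs q (prime_mulL hq)) => _ [hqf' ->].
  have hqa' : ~ sval q a' := prime_mulR hq.
  rewrite mulC_cls //; apply: cls_eq; split; first exact: prime_mul.
  split; first exact: prime_one.
  exists 1; split; first exact: prime_one.
  rewrite /= mulr1 mul1r (mulrC a').
  by rewrite mul1r subrr.
Qed.
End SA.

Local Close Scope ring_scope.

Local Open Scope ring_scope.

Lemma unit_near_SpecH (H : HRData) (hH : is_hyperfield H) (V : unit -> Prop)
  (hV : hs_open (h:=SpecH H) V) (t : hs_sec (SpecH H) V hV) (hv : V tt) :
  unit_near (SpecH H) V tt hV t <-> (t : fun_hrd (V tt) H) hv <> hr_zero.
Proof.
split.
- move=> [W [hW [hWU [Wt [y hy]]]]].
  have := f_equal (fun F : fun_hrd (W tt) H => F Wt) hy => /=.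
  rewrite (proof_irrelevance _ (hWU tt Wt) hv) => e e0.
  by apply: (hone_ne0 hH); rewrite -e e0 (hmul0l hH).
- move=> ht; exists V, hV, (fun _ h => h); split=> //.
  exists (fun _ => hinv (t hv)) => /=.
  apply: functional_extensionality => hv' /=.
  by rewrite (proof_irrelevance _ hv' hv) hinvr.
Qed.

Lemma lhs_ext (H : HRData) (A : comPzRingType) (m1 m2 : LhsHom (SpecH H) (SpecA A)) :
  mor_pt m1 tt = mor_pt m2 tt ->
  (forall U (hU : zar_open U) (s : hs_sec (SpecA A) U hU)
     (h1 : U (mor_pt m1 tt)) (h2 : U (mor_pt m2 tt)),
     (mor_sh m1 hU s : fun_hrd _ H) h1 = (mor_sh m2 hU s : fun_hrd _ H) h2) ->
  m1 = m2.
Proof.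
case: m1 => pt1 c1 sh1 hom1 nat1 loc1; case: m2 => pt2 c2 sh2 hom2 nat2 loc2 /= ept esh.
have e : pt1 = pt2 by apply: functional_extensionality => -[].
subst pt2.
have ec : c1 = c2 by apply: proof_irrelevance.
subst c2.
have es : sh1 = sh2.
  apply: functional_extensionality_dep => U; apply: functional_extensionality_dep => hU.
  apply: functional_extensionality_dep => s; apply: functional_extensionality_dep => h.
  exact: esh.
subst sh2; f_equal; apply: proof_irrelevance.
Qed.

Local Close Scope ring_scope.

Local Open Scope ring_scope.

Section Canon.
Variable A : comPzRingType.
Lemma canon_hom : @is_hr_hom (ring_hrd A) (hs_sec (SpecA A) _ (@zar_open_full A)) (@canon A).
Proof.
split; first by []. split; first by [].
split.
- move=> x y; apply: sec_ext => q hq /=.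
  by rewrite mulC_cls ?mulr1 //; apply: prime_one.
- move=> x y z /= -> p hp /=.
  by rewrite addC_cls ?mulr1 //; apply: prime_one.
Qed.

Lemma glob_hom (H : HRData) (m : LhsHom (SpecH H) (SpecA A)) :
  @is_hr_hom (ring_hrd A) H (glob_map m).
Proof.
have [h0 [h1 [hM hA]]] := mor_hom _ _ m _ (zar_open_full A).
have [c0 [c1 [cM cA]]] := canon_hom.
rewrite /glob_map; split; last split; last split.
- by rewrite c0 h0.
- by rewrite c1 h1.
- by move=> x y; rewrite cM hM.
- by move=> x y z e; apply: (hA _ _ _ (cA _ _ _ e)).
Qed.
End Canon.

Local Close Scope ring_scope.

Local Open Scope ring_scope.

Section Main.
Variable H : HRData.
Hypothesis hH : is_hyperfield H.
Variable A : comPzRingType.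
Variable g : A -> H.
Hypothesis hg : @is_hr_hom (ring_hrd A) H g.
Local Notation "x ** y" := (@hr_mul H x y) (at level 40).
Local Notation O := (@hr_zero H).
Local Notation I1 := (@hr_one H).

Lemma g0 : g 0 = O. Proof. by case: hg. Qed.
Lemma g1 : g 1 = I1. Proof. by case: hg => _ []. Qed.
Lemma gM x y : g (x * y) = g x ** g y. Proof. by case: hg => _ [_ [h _]]; apply: h. Qed.
Lemma gD x y : hr_add (g x) (g y) (g (x + y)). Proof. by case: hg => _ [_ [_ h]]; apply: h. Qed.

Lemma g_sub0 x y : g (x - y) = O -> g x = g y.
Proof. by move=> e; have := gD (x - y) y; rewrite e subrK => /(hadd0 hH). Qed.

Definition gker := fun a : A => g a = O.
Lemma ker_prime : prime_ideal gker.
Proof.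
rewrite /gker; split; first exact: g0.
split; first by move=> x y hx hy; have := gD x y; rewrite hx => /(hadd0 hH) ->.
split; first by move=> a x hx; rewrite gM hx (hmul0 hH).
split; first by rewrite g1; apply: (hone_ne0 hH).
by move=> x y; rewrite gM => /(hmul_eq0 hH).
Qed.
Definition p0 : SpecPt A := exist _ gker ker_prime.

Definition evalg (C : A * A -> Prop) : H :=
  let x := epsilon (inhabits ((0 : A), (1 : A))) C in g x.1 ** hinv (g x.2).

Section P.
Variable p : SpecPt A.
Hypothesis hp : forall x, sval p x <-> g x = O.

Lemma gfrac a f a' f' : frac_eqv p (a, f) (a', f') -> g a ** g f' = g a' ** g f.
Proof.
move=> [_ [_ [u [hu eu]]]] /=; rewrite -!gM; apply: g_sub0.
have : g u ** g (a * f' - a' * f) = O by rewrite -gM /= eu g0.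
by case/(hmul_eq0 hH) => // /hp.
Qed.

Lemma evalg_cls a f : ~ sval p f -> evalg (cls p a f) = g a ** hinv (g f).
Proof.
move=> hf; rewrite /evalg.
have := epsilon_spec (inhabits ((0 : A), (1 : A))) (cls p a f) (ex_intro _ (a, f) (eqv_refl a hf)).
move: (epsilon _ _) => [a' f'] hx /=.
have hf' : ~ sval p f' by case: hx => _ [].
symmetry; apply: (hfrac_eq hH); first by move/hp.
- by move/hp.
- exact: gfrac.
Qed.
End P.

Lemma hp0 x : sval p0 x <-> g x = O. Proof. by []. Qed.

Lemma rep (U : SpecPt A -> Prop) (s : SecA U) p (h : U p) :
  exists a f, ~ sval p f /\ sval s p h = cls p a f.
Proof.
case: (svalP s p h) => k [a [f [hk Hs]]]; case: (Hs p hk) => _ [hf e].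
by exists a, f; split=> //; apply: e.
Qed.

Definition shmap (U : SpecPt A -> Prop) (hU : zar_open U) (s : hs_sec (SpecA A) U hU) :
  hs_sec (SpecH H) (fun _ => U p0) I :=
  (fun h : U p0 => evalg (sval s p0 h)) : fun_hrd (U p0) H.

Lemma shmap_hom U (hU : zar_open U) : is_hr_hom (@shmap U hU).
Proof.
have n1 : ~ sval p0 1 := @prime_one _ p0.
split; last split; last split.
- apply: functional_extensionality => h /=.
  by rewrite /shmap /= (evalg_cls hp0 _ n1) g0 (hmul0l hH).
- apply: functional_extensionality => h /=.
  by rewrite /shmap /= (evalg_cls hp0 _ n1) g1 (hinv1 hH) (hmul1 hH).
- move=> s t; apply: functional_extensionality => h; rewrite /shmap /=.
  have [a [f [hf es]]] := rep s h; have [b [e [he et]]] := rep t h.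
  have gf : g f <> O by move/hp0.
  have ge : g e <> O by move/hp0.
  rewrite es et (mulC_cls a b hf he) (evalg_cls hp0 _ (prime_mul hf he)).
  rewrite (evalg_cls hp0 _ hf) (evalg_cls hp0 _ he).
  by rewrite !gM (hinvM hH gf ge) (hmulACA hH).
- move=> s t u hu h; rewrite /shmap /=.
  have [a [f [hf es]]] := rep s h; have [b [e [he et]]] := rep t h.
  have gf : g f <> O by move/hp0.
  have ge : g e <> O by move/hp0.
  rewrite hu es et (addC_cls a b hf he) (evalg_cls hp0 _ (prime_mul hf he)).
  rewrite (evalg_cls hp0 _ hf) (evalg_cls hp0 _ he).
  have E1 : g a ** hinv (g f) = hinv (g (f * e)) ** g (a * e).
    rewrite !gM (hinvM hH gf ge) (hmulACA hH) (hmulC hH (hinv (g f))).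
    by rewrite (hmulC hH (hinv (g e))) (hinvr hH ge) (hmul1r hH).
  have E2 : g b ** hinv (g e) = hinv (g (f * e)) ** g (b * f).
    rewrite !gM (hinvM hH gf ge) (hmulC hH (hinv (g f))) (hmulACA hH) (hmulC hH (hinv (g e))).
    by rewrite (hmulC hH (hinv (g f))) (hinvr hH gf) (hmul1r hH).
  rewrite E1 E2 (hmulC hH (g _)); apply: (hdistr hH).
  by exists (g (a * e + b * f)); split=> //; apply: gD.
Qed.

Lemma eval_ne0 a f : ~ sval p0 f -> (g a ** hinv (g f) <> O <-> g a <> O).
Proof.
move=> hf; have gf : g f <> O by move/hp0.
split=> h e; apply: h.
- by rewrite e (hmul0l hH).
- by case/(hmul_eq0 hH): e => // /(hinv_ne0 hH gf).
Qed.

Definition m0 : LhsHom (SpecH H) (SpecA A).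
Proof.
refine (@Build_LhsHom (SpecH H) (SpecA A) (fun _ => p0) (fun U hU => I) shmap _ _ _).
- exact: shmap_hom.
- by move=> U V hU hV hVU s.
- move=> [] U hU s hp.
  have [a [f [hf es]]] := rep s hp.
  rewrite (unit_near_iff hf es) (unit_near_SpecH hH _ hp) /shmap /=.
  rewrite es (evalg_cls hp0 _ hf) (eval_ne0 _ hf); done.
Defined.

Lemma m0_glob a : glob_map m0 a = g a.
Proof.
rewrite /glob_map /= /shmap /= (evalg_cls hp0 _ (@prime_one _ p0)).
by rewrite g1 (hinv1 hH) (hmul1r hH).
Qed.

Section Uniq.
Variable m : LhsHom (SpecH H) (SpecA A).
Hypothesis hm : forall a, glob_map m a = g a.

Lemma pt_ker x : sval (mor_pt m tt) x <-> g x = O.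
Proof.
have L := mor_local _ _ m tt _ (zar_open_full A) (canon x) I.
have n1 : ~ sval (mor_pt m tt) 1 := @prime_one _ _.
rewrite (@unit_near_iff _ _ (zar_open_full A) _ I (canon x) x 1 n1 (erefl _)) in L.
rewrite (unit_near_SpecH hH _ I) in L.
change ((mor_sh m (zar_open_full A) (canon x) : fun_hrd True H) I) with (glob_map m x) in L.
rewrite hm in L.
split; first by move=> hx; apply: NNPP => hgx; exact: (proj2 L hgx hx).
by move=> hgx; apply: NNPP => hx; exact: (proj1 L hx hgx).
Qed.

Lemma pt_eq : mor_pt m tt = p0.
Proof.
have hq := pt_ker; move: (mor_pt m tt) hq => [P hP] /= hq.
have eP : P = gker.
  by apply: functional_extensionality => x; apply: propositional_extensionality; apply: hq.
subst P; rewrite /p0; f_equal; apply: proof_irrelevance.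
Qed.

Lemma sh_eq U (hU : zar_open U) (s : hs_sec (SpecA A) U hU) (h : U (mor_pt m tt)) :
  (mor_sh m hU s : fun_hrd _ H) h = evalg (sval s (mor_pt m tt) h).
Proof.
set q := mor_pt m tt in h *.
case: (svalP s q h) => k [a [f [hk Hs]]].
pose V := fun q' : SpecPt A => ~ sval q' k.
have hV : zar_open V.
  by exists (fun x => x = k) => q'; split; [exists k | case=> x [-> ?]].
have hVU : forall x, V x -> U x by move=> x hx; case: (Hs x hx).
have hVT : forall x : SpecPt A, V x -> True by [].
have hqf : ~ sval q f by case: (Hs q hk) => _ [].
have E : hr_mul (hs_res (h:=SpecA A) U V hU hV hVU s)
                (hs_res (h:=SpecA A) _ V (zar_open_full A) hV hVT (canon f)) =
         hs_res (h:=SpecA A) _ V (zar_open_full A) hV hVT (canon a).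
  apply: sec_ext => q' hq' /=.
  case: (Hs q' hq') => _ [hf' ->].
  rewrite (mulC_cls a f hf' (@prime_one _ q')); apply: cls_eq.
  split; first exact: prime_mul hf' (@prime_one _ q').
  split; first exact: (@prime_one _ q').
  exists 1; split; first exact: (@prime_one _ q').
  by rewrite /= !mulr1 mul1r subrr.
have [_ [_ [hM _]]] := mor_hom _ _ m _ hV.
have := f_equal (@mor_sh _ _ m V hV) E.
rewrite hM !mor_nat => /(f_equal (fun F : fun_hrd (V q) H => F hk)) /=.
rewrite (proof_irrelevance _ (hVT _ hk) I).
change ((mor_sh m (zar_open_full A) (canon f) : fun_hrd True H) I) with (glob_map m f).
change ((mor_sh m (zar_open_full A) (canon a) : fun_hrd True H) I) with (glob_map m a).
rewrite !hm (proof_irrelevance _ (hVU q hk) h) => e.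
have gf : g f <> O by move/pt_ker.
rewrite (proj2 (proj2 (Hs q hk)) h) (evalg_cls pt_ker _ hqf) -e.
by rewrite -(hmulA hH) (hinvr hH gf) (hmul1r hH).
Qed.
End Uniq.

Lemma main2 : exists! m : LhsHom (SpecH H) (SpecA A), forall a : A, glob_map m a = g a.
Proof.
exists m0; split; first exact: m0_glob.
move=> m hm; apply: lhs_ext; first by rewrite (pt_eq hm).
move=> U hU s h1 h2; rewrite (sh_eq hm) /=.
move: h2; rewrite (pt_eq hm) => h2.
by rewrite /shmap /= (proof_irrelevance _ h1 h2).
Qed.
End Main.

Local Close Scope ring_scope.

Theorem proposition3p14 (H : HRData) (hH : is_hyperfield H) (A : comPzRingType) :
  (forall m : LhsHom (SpecH H) (SpecA A),
      @is_hr_hom (ring_hrd A) H (glob_map m)) /\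
  (forall g : A -> H, @is_hr_hom (ring_hrd A) H g ->
      exists! m : LhsHom (SpecH H) (SpecA A), forall a : A, glob_map m a = g a).
Proof.
split; first exact: glob_hom.
by move=> g hg; apply: main2.
Qed.
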